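(* Let $\Theta\subseteq\mathbb{R}^p$ be convex, let $f:\mathbb{R}^p\to\mathbb{R}$, let $\kappa\in\Theta$, and let $g\in\mathcal{S}_L(f,\kappa)$. Define $h\triangleq g-f$ and let $\theta'\in\operatorname{arg\,min}_{\theta\in\Theta} g(\theta)$. Then for all $\theta\in\Theta$: (i) $|h(\theta)|\le \frac{L}{2}\|\theta-\kappa\|_2^2$; (ii) $f(\theta')\le f(\theta)+\frac{L}{2}\|\theta-\kappa\|_2^2$. If moreover $g\in\mathcal{S}_{L,\rho}(f,\kappa)$, then for all $\theta\in\Theta$: (iii) $f(\theta')+\frac{\rho}{2}\|\theta'-\theta\|_2^2\le f(\theta)+\frac{L}{2}\|\theta-\kappa\|_2^2$.
   Context: First-order surrogates: given a convex set $\Theta\subseteq\mathbb{R}^p$, a function $f:\mathbb{R}^p\to\mathbb{R}$, a point $\kappa$ and $L>0$, a function $g:\mathbb{R}^p\to\mathbb{R}$ belongs to $\mathcal{S}_L(f,\kappa)$ (is a first-order surrogate of $f$ near $\kappa$ in $\Theta$) if (a) (majorization) $g(\theta')\ge f(\theta')$ for all $\theta'\in\operatorname{arg\,min}_{\theta\in\Theta}g(\theta)$, and (b) (smoothness) the approximation error $h\triangleq g-f$ is differentiable on $\mathbb{R}^p$ with $L$-Lipschitz continuous gradient, and $h(\kappa)=0$, $\nabla h(\kappa)=0$. $\mathcal{S}_{L,\rho}(f,\kappa)$ denotes the subset of $\mathcal{S}_L(f,\kappa)$ consisting of $\rho$-strongly convex functions ($\rho>0$). *)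

(* Defs.v *)
(* R^p is modelled as row vectors 'rV[R]_p. *)
From HB Require Import structures.
From mathcomp Require Import all_boot all_order all_algebra.
From mathcomp Require Import all_classical all_reals all_analysis.
Set Implicit Arguments. Unset Strict Implicit. Unset Printing Implicit Defensive.
Import Order.TTheory GRing.Theory Num.Theory.
Import numFieldNormedType.Exports.
Local Open Scope classical_set_scope.
Local Open Scope ring_scope.

Section Defs.
Variables (R : realType) (p : nat).

Definition enorm (x : 'rV[R]_p) : R := Num.sqrt (\sum_(i < p) x ord0 i ^+ 2).

Definition convex_setR (Th : set 'rV[R]_p) : Prop :=
  forall x y (t : R), Th x -> Th y -> 0 <= t -> t <= 1 ->
    Th (t *: x + (1 - t) *: y).

Definition grad (h : 'rV[R]_p -> R) (x : 'rV[R]_p) : 'rV[R]_p :=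
  \row_(i < p) ('d h x : 'rV[R]_p -> R) (delta_mx ord0 i).

Definition is_argmin (Th : set 'rV[R]_p) (g : 'rV[R]_p -> R) (th' : 'rV[R]_p) :=
  Th th' /\ forall th, Th th -> g th' <= g th.

Definition first_order_surrogate (Th : set 'rV[R]_p) (L : R)
    (f g : 'rV[R]_p -> R) (kappa : 'rV[R]_p) : Prop :=
  (forall th', is_argmin Th g th' -> f th' <= g th') /\
  let h := fun x => g x - f x in
  (forall x, differentiable h x) /\
  (forall x y, enorm (grad h x - grad h y) <= L * enorm (x - y)) /\
  h kappa = 0 /\ grad h kappa = 0.

Definition strongly_convex (rho : R) (g : 'rV[R]_p -> R) : Prop :=
  forall x y (t : R), 0 <= t -> t <= 1 ->
    g (t *: x + (1 - t) *: y) <=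
      t * g x + (1 - t) * g y - rho / 2 * t * (1 - t) * enorm (x - y) ^+ 2.

End Defs.

(* Main.v *)
Require Import Defs.
From HB Require Import structures.
From mathcomp Require Import all_boot all_order all_algebra.
From mathcomp Require Import all_classical all_reals all_analysis.
From mathcomp Require Import ring lra.
Import Order.TTheory GRing.Theory Num.Theory.
Import numFieldNormedType.Exports.
Local Open Scope classical_set_scope.
Local Open Scope ring_scope.

Section H.
Variables (R : realType) (p : nat).

Lemma phi_derive (h : 'rV[R]_p -> R) (v k : 'rV[R]_p) (t : R) :
  (forall x, differentiable h x) ->
  is_derive t 1 (fun s : R => h (s *: v + k)) (('d h (t *: v + k) : _ -> _) v).
Proof.
move=> dh.
pose l := (fun s : R => s *: v) + cst k.
have dl : is_diff t l (( *:%R^~ v) + 0) by exact: is_diffD.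
have -> : (fun s : R => h (s *: v + k)) = h \o l by [].
have dc : differentiable (h \o l) t.
  apply: differentiable_comp; first exact: ex_diff.
  exact: dh.
apply: DeriveDef; first exact: diff_derivable.
rewrite deriveE // diff_comp; [|exact: ex_diff|exact: dh].
by rewrite diff_val /= addr0 scale1r.
Qed.
Lemma dh_grad (h : 'rV[R]_p -> R) x (v : 'rV[R]_p) :
  ('d h x : _ -> _) v = \sum_(i < p) v ord0 i * grad h x ord0 i.
Proof.
rewrite {1}(row_sum_delta v) linear_sum; apply: eq_bigr => i _.
by rewrite linearZ /grad mxE.
Qed.

Lemma cs_bound (a v : 'rV[R]_p) (k : R) : 0 < k ->
  \sum_(i < p) a ord0 i ^+ 2 <= k ^+ 2 * \sum_(i < p) v ord0 i ^+ 2 ->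
  `|\sum_(i < p) v ord0 i * a ord0 i| <= k * \sum_(i < p) v ord0 i ^+ 2.
Proof.
move=> k0 H.
have key : \sum_(i < p) (a ord0 i ^+ 2 / k + k * v ord0 i ^+ 2)
   <= 2 * (k * \sum_(i < p) v ord0 i ^+ 2).
  rewrite big_split /= -mulr_suml -mulr_sumr.
  have : (\sum_(i < p) a ord0 i ^+ 2) / k <= k * \sum_(i < p) v ord0 i ^+ 2.
    rewrite ler_pdivrMr //; apply: (le_trans H); rewrite le_eqVlt; apply/orP; left; apply/eqP; ring.
  lra.
have h1 : - (2 * \sum_(i < p) v ord0 i * a ord0 i) <=
    \sum_(i < p) (a ord0 i ^+ 2 / k + k * v ord0 i ^+ 2).
  rewrite mulr_sumr -sumrN; apply: ler_sum => i _.
  have : 0 <= (a ord0 i + k * v ord0 i) ^+ 2 / k by rewrite divr_ge0 // ?sqr_ge0 ?ltW.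
  have -> : (a ord0 i + k * v ord0 i) ^+ 2 / k =
     a ord0 i ^+ 2 / k + k * v ord0 i ^+ 2 + 2 * (v ord0 i * a ord0 i).
    by field; rewrite gt_eqF.
  lra.
have h2 : 2 * \sum_(i < p) v ord0 i * a ord0 i <=
    \sum_(i < p) (a ord0 i ^+ 2 / k + k * v ord0 i ^+ 2).
  rewrite mulr_sumr; apply: ler_sum => i _.
  have : 0 <= (a ord0 i - k * v ord0 i) ^+ 2 / k by rewrite divr_ge0 // ?sqr_ge0 ?ltW.
  have -> : (a ord0 i - k * v ord0 i) ^+ 2 / k =
     a ord0 i ^+ 2 / k + k * v ord0 i ^+ 2 - 2 * (v ord0 i * a ord0 i).
    by field; rewrite gt_eqF.
  lra.
rewrite ler_norml; apply/andP; split; lra.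
Qed.


Lemma sum_sq_ge0 (v : 'rV[R]_p) : 0 <= \sum_(i < p) v ord0 i ^+ 2.
Proof. by apply: sumr_ge0 => i _; rewrite sqr_ge0. Qed.

Lemma hbound (h : 'rV[R]_p -> R) (L : R) (kappa th : 'rV[R]_p) :
  0 < L -> (forall x, differentiable h x) ->
  (forall x y, enorm (grad h x - grad h y) <= L * enorm (x - y)) ->
  h kappa = 0 -> grad h kappa = 0 ->
  `|h th| <= L / 2 * enorm (th - kappa) ^+ 2.
Proof.
move=> L0 dh lip hk gk.
set v := th - kappa.
set N := \sum_(i < p) v ord0 i ^+ 2.
have N0 : 0 <= N by exact: sum_sq_ge0.
have -> : enorm v ^+ 2 = N by rewrite /enorm sqr_sqrtr.
pose D (c : R) := ('d h (c *: v + kappa) : _ -> _) v.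
have Dbd c : 0 < c -> `|D c| <= (L * c) * N.
  move=> c0; rewrite /D dh_grad; apply: cs_bound; first exact: mulr_gt0.
  have := lip (c *: v + kappa) kappa.
  rewrite gk subr0 addrK /enorm.
  have -> : \sum_(i < p) (c *: v) ord0 i ^+ 2 = c ^+ 2 * N.
    by rewrite /N mulr_sumr; apply: eq_bigr => i _; rewrite mxE exprMn.
  set A := \sum_(i < p) grad h (c *: v + kappa) ord0 i ^+ 2.
  have A0 : 0 <= A by exact: sum_sq_ge0.
  rewrite sqrtrM ?sqr_ge0 // sqrtr_sqr (ger0_norm (ltW c0)) => H.
  have sA := sqrtr_ge0 A; have sN := sqrtr_ge0 N.
  have eA : Num.sqrt A ^+ 2 = A by rewrite sqr_sqrtr.
  have eN : Num.sqrt N ^+ 2 = N by rewrite sqr_sqrtr.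
  rewrite -eA -/N -eN.
  have H2 : 0 <= L * (c * Num.sqrt N) - Num.sqrt A by lra.
  have H3 : 0 <= L * (c * Num.sqrt N) + Num.sqrt A.
    by apply: addr_ge0 => //; apply: mulr_ge0; [exact: ltW|apply: mulr_ge0 => //; exact: ltW].
  have := mulr_ge0 H2 H3. 
  have -> : (L * (c * Num.sqrt N) - Num.sqrt A) * (L * (c * Num.sqrt N) + Num.sqrt A)
     = (L * c) ^+ 2 * Num.sqrt N ^+ 2 - Num.sqrt A ^+ 2 by ring.
  by rewrite subr_ge0.
have dphi (x : R) : is_derive x 1 (fun s : R => h (s *: v + kappa)) (D x).
  exact: phi_derive.
have dq (x : R) : is_derive x (1:R) ((L / 2 * N) \*: (@id R * id)) ((L / 2 * N) *: (x *: 1 + x *: 1)).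
  by apply: is_deriveZ; apply: is_deriveM.
have e1 : h (1 *: v + kappa) = h th by rewrite scale1r subrK.
have e0 : h (0 *: v + kappa) = 0 by rewrite scale0r add0r.
have scE (a b : R) : a *: b = a * b by [].
rewrite ler_norml; apply/andP; split.
- pose psi := fun s : R => h (s *: v + kappa) + L / 2 * N * (s * s).
  have dpsi (x : R) : is_derive x (1:R) psi (D x + L * N * x).
    have ep : psi = (fun s : R => h (s *: v + kappa)) + (L / 2 * N) \*: (@id R * id).
      by apply/funext => s; rewrite !fctE.
    rewrite ep; apply: is_derive_eq.
    rewrite ![_%:A]mulr1 -[X in _ + X = _]/((L / 2 * N) * (x + x)); by field.
  have cpsi : {within `[0, 1], continuous psi}.
    apply: derivable_within_continuous => y _; exact: ex_derive.
  have [c cin E] := MVT (@ltr01 R) (fun x _ => dpsi x) cpsi.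
  have c0 : 0 < c by move: cin; rewrite in_itv /= => /andP[].
  move: E; rewrite /psi e1 e0 => E.
  have := Dbd c c0; rewrite ler_norml => /andP [Hc _].
  move: E Hc; rewrite ?mul0r ?mulr0 ?mulr1 ?mul1r ?add0r ?addr0 ?subr0; lra.
- pose psi := fun s : R => h (s *: v + kappa) - L / 2 * N * (s * s).
  have dpsi (x : R) : is_derive x (1:R) psi (D x - L * N * x).
    have ep : psi = (fun s : R => h (s *: v + kappa)) - (L / 2 * N) \*: (@id R * id).
      by apply/funext => s; rewrite !fctE.
    rewrite ep; apply: is_derive_eq.
    rewrite ![_%:A]mulr1 -[X in _ - X = _]/((L / 2 * N) * (x + x)); by field.
  have cpsi : {within `[0, 1], continuous psi}.
    apply: derivable_within_continuous => y _; exact: ex_derive.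
  have [c cin E] := MVT (@ltr01 R) (fun x _ => dpsi x) cpsi.
  have c0 : 0 < c by move: cin; rewrite in_itv /= => /andP[].
  move: E; rewrite /psi e1 e0 => E.
  have := Dbd c c0; rewrite ler_norml => /andP [_ Hc].
  move: E Hc; rewrite ?mul0r ?mulr0 ?mulr1 ?mul1r ?subr0 ?sub0r; lra.
Qed.

Lemma enormN (x : 'rV[R]_p) : enorm (- x) = enorm x.
Proof. by rewrite /enorm; congr Num.sqrt; apply: eq_bigr => i _; rewrite mxE sqrrN. Qed.

Lemma enorm_ge0 (x : 'rV[R]_p) : 0 <= enorm x.
Proof. exact: sqrtr_ge0. Qed.

End H.

Theorem lemma2p1 (R : realType) (p : nat) (Th : set 'rV[R]_p)
    (f g : 'rV[R]_p -> R) (kappa : 'rV[R]_p) (L : R) (th' : 'rV[R]_p) :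
  convex_setR Th -> Th kappa -> 0 < L ->
  first_order_surrogate Th L f g kappa ->
  is_argmin Th g th' ->
  (forall th, Th th ->
     `| g th - f th | <= L / 2 * enorm (th - kappa) ^+ 2 /\
     f th' <= f th + L / 2 * enorm (th - kappa) ^+ 2) /\
  (forall rho : R, 0 < rho -> strongly_convex rho g ->
     forall th, Th th ->
       f th' + rho / 2 * enorm (th' - th) ^+ 2
         <= f th + L / 2 * enorm (th - kappa) ^+ 2).
Proof.
move=> cvx Thk L0 [maj [dh [lip [hk gk]]]] am.
have hb th : `|g th - f th| <= L / 2 * enorm (th - kappa) ^+ 2.
  exact: (@hbound R p _ L kappa th L0 dh lip hk gk).
have fth' : f th' <= g th' := maj th' am.
have gle th : Th th -> g th' <= g th := am.2 th.
have hb' th : g th - f th <= L / 2 * enorm (th - kappa) ^+ 2.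
  exact: le_trans (ler_norm _) (hb th).
split.
  move=> th Tth; split; first exact: hb.
  have := hb' th; have := gle th Tth; lra.
move=> rho rho0 sc th Tth.
set D := enorm (th' - th) ^+ 2.
have D0 : 0 <= D by rewrite /D sqr_ge0.
set c := rho / 2 * D.
have c0 : 0 <= c by apply: mulr_ge0 => //; apply: divr_ge0 => //; exact: ltW.
set Dl := g th - g th'.
have Dl0 : 0 <= Dl by rewrite /Dl subr_ge0; exact: gle.
have key t : 0 < t -> t <= 1 -> c * (1 - t) <= Dl.
  move=> t0 t1.
  have H := sc th th' t (ltW t0) t1.
  have H2 := gle _ (cvx th th' t Tth am.1 (ltW t0) t1).
  have eD : enorm (th - th') ^+ 2 = D by rewrite /D -opprB enormN.
  rewrite eD in H.
  rewrite -(ler_pM2l t0) /c /Dl; lra.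
have cle : c <= Dl.
  have [//|hlt] := leP c Dl.
  have cpos : 0 < c by lra.
  pose t := (c - Dl) / (2 * c).
  have t0 : 0 < t by apply: divr_gt0; lra.
  have t1 : t <= 1 by rewrite /t ler_pdivrMr; lra.
  have := key t t0 t1.
  have -> : c * (1 - t) = (c + Dl) / 2 by rewrite /t; field; lra.
  lra.
have := hb' th; move: cle fth'; rewrite /c /Dl /D; lra.
Qed.
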